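(* Let $\alpha>0$ and $k\ge 2$ be an integer. Then $$\sum_{\sigma\in\mathfrak S_k}\det\Big[\Gamma(j+\sigma(i)\alpha)\prod_{r=1}^{i-1}(r+\sigma(i)\alpha)\Big]_{1\le i,j\le k}=\alpha^{k(k-1)}\prod_{j=1}^k ((j-1)!)^2\,\Gamma(1+\alpha j)>0.$$
   Context: $\mathfrak S_k$ is the symmetric group on $\{1,\dots,k\}$; in the matrix, $i$ is the row index and $j$ the column index, and empty products equal $1$. *)

(* Defs.v *)
From Stdlib Require Import Reals ClassicalEpsilon.
From mathcomp Require Import all_boot all_fingroup.
Set Implicit Arguments. Unset Strict Implicit. Unset Printing Implicit Defensive.

Local Open Scope R_scope.

Definition Gamma_integrand (x t : R) : R := Rpower t (x - 1) * exp (- t).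

Definition is_Gamma (x l : R) : Prop :=
  forall eps : R, 0 < eps ->
    exists d B : R, 0 < d <= B /\
      forall a b : R, 0 < a < d -> B < b ->
        exists pr : Riemann_integrable (Gamma_integrand x) a b,
          Rabs (RiemannInt pr - l) < eps.

(* Euler's Gamma function (meaningful for x > 0). *)
Definition Gamma (x : R) : R := epsilon (inhabits 0) (is_Gamma x).

Definition rdet (k : nat) (A : 'I_k -> 'I_k -> R) : R :=
  \big[Rplus/0]_(s : 'S_k)
     ((if odd_perm s then -1 else 1) * \big[Rmult/1]_(i < k) A i (s i)).

(* Main.v *)
Require Import Defs.
From Stdlib Require Import Reals Lra Lia ClassicalEpsilon.
From Coquelicot Require Import Coquelicot.
Local Open Scope R_scope.

Lemma GI_pos x t : 0 < Gamma_integrand x t.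
Proof. unfold Gamma_integrand, Rpower. apply Rmult_lt_0_compat; apply exp_pos. Qed.

Lemma GI_cont x t : 0 < t -> continuous (Gamma_integrand x) t.
Proof.
intros Ht. apply (@ex_derive_continuous R_AbsRing R_NormedModule). unfold Gamma_integrand, Rpower.
auto_derive. exact Ht.
Qed.

Lemma GI_ex x a b : 0 < a -> 0 < b -> ex_RInt (Gamma_integrand x) a b.
Proof.
intros Ha Hb. apply (@ex_RInt_continuous R_CompleteNormedModule). intros z Hz. apply GI_cont.
assert (0 < Rmin a b) by (apply Rmin_case; lra). lra.
Qed.

Definition FG x a b := RInt (Gamma_integrand x) a b.

Lemma FG_ge0 x a b : 0 < a <= b -> 0 <= FG x a b.
Proof.
intros H. apply RInt_ge_0; [lra| apply GI_ex; lra|]. intros; left; apply GI_pos.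
Qed.

Lemma FG_chasles x a b c : 0 < a -> 0 < b -> 0 < c -> FG x a b + FG x b c = FG x a c.
Proof.
intros. unfold FG. rewrite <- (RInt_Chasles _ a b c); try (apply GI_ex; lra). reflexivity.
Qed.

Lemma FG_mono x a b a' b' : 0 < a' <= a -> a <= b -> b <= b' -> FG x a b <= FG x a' b'.
Proof.
intros. rewrite <- (FG_chasles x a' a b') by lra. rewrite <- (FG_chasles x a b b') by lra.
assert (0 <= FG x a' a) by (apply FG_ge0; lra).
assert (0 <= FG x b b') by (apply FG_ge0; lra). lra.
Qed.

Lemma exp_pow_n u n : exp u ^ n = exp (INR n * u).
Proof.
induction n as [|n IH]. simpl. rewrite Rmult_0_l, exp_0; reflexivity.
rewrite <- tech_pow_Rmult, IH, <- exp_plus. f_equal. rewrite (S_INR n). ring.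
Qed.

Lemma Rpower_le1 t c : 0 <= c -> 0 < t <= 1 -> Rpower t c <= 1.
Proof.
intros Hc Ht. apply Rle_trans with (Rpower 1 c).
apply Rle_Rpower_l; lra. unfold Rpower. rewrite ln_1, Rmult_0_r, exp_0. lra.
Qed.

Lemma nat_above x : exists n : nat, (1 <= n)%nat /\ x <= INR n.
Proof.
destruct (INR_unbounded x) as [n Hn]. exists (S n). split. lia.
rewrite S_INR. lra.
Qed.

Lemma exp_mono a b : a <= b -> exp a <= exp b.
Proof. intros [H|H]. left; apply exp_increasing; exact H. subst; lra. Qed.

Lemma GI_bound x : 1 <= x -> exists M, 0 < M /\ forall t, 0 < t -> Gamma_integrand x t <= M * exp (-t/2).
Proof.
intros Hx. destruct (nat_above (x - 1)) as [n [Hn1 Hn]].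
assert (Hn1' : 1 <= INR n) by (apply (le_INR 1); exact Hn1).
set (K := (2 * INR n) ^ n).
assert (HK : 0 <= K). { unfold K. apply pow_le. lra. }
exists (K + exp (1/2)). split. { pose proof (exp_pos (1/2)). lra. }
intros t Ht. unfold Gamma_integrand.
destruct (Rle_or_lt t 1) as [Ht1|Ht1].
- assert (H1 : Rpower t (x - 1) <= 1) by (apply Rpower_le1; lra).
  assert (H2 : exp (- t) <= 1). { apply Rle_trans with (exp 0). apply exp_mono. lra. rewrite exp_0; lra. }
  assert (H3 : 1 <= exp (1/2) * exp (-t/2)). { rewrite <- exp_plus. apply Rle_trans with (exp 0). rewrite exp_0; lra. apply exp_mono. lra. }
  assert (H4 : 0 <= Rpower t (x-1)). { unfold Rpower; left; apply exp_pos. }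
  assert (H5 : 0 <= exp (-t)) by (left; apply exp_pos).
  assert (H6 : 0 <= K * exp (-t/2)). { apply Rmult_le_pos. lra. left; apply exp_pos. }
  assert (Rpower t (x - 1) * exp (- t) <= 1).
  { apply Rle_trans with (1*1). apply Rmult_le_compat; lra. lra. }
  nra.
- assert (H1 : Rpower t (x - 1) <= t ^ n).
  { rewrite <- Rpower_pow by lra. apply Rle_Rpower; lra. }
  set (u := t / (2 * INR n)).
  assert (Hu : 0 <= u). { unfold u. apply Rle_mult_inv_pos; lra. }
  assert (Htu : t = 2 * INR n * u). { unfold u. field. lra. }
  assert (H2 : u ^ n <= exp u ^ n).
  { apply pow_incr. split. lra. pose proof (exp_ineq1_le u). lra. }
  rewrite exp_pow_n in H2.
  assert (H3 : INR n * u = t / 2). { rewrite Htu. field; lra. }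
  rewrite H3 in H2.
  assert (H4 : t ^ n <= K * exp (t/2)).
  { rewrite Htu at 1. rewrite Rpow_mult_distr. unfold K. apply Rmult_le_compat_l. exact HK.
    exact H2. }
  assert (H5 : 0 < exp (-t)) by apply exp_pos.
  assert (H6 : exp (t/2) * exp (-t) = exp (-t/2)). { rewrite <- exp_plus. f_equal. field. }
  assert (H7 : 0 < exp (1/2) * exp (-t/2)). { apply Rmult_lt_0_compat; apply exp_pos. }
  assert (Rpower t (x - 1) * exp (- t) <= K * exp (-t/2)).
  { rewrite <- H6, <- Rmult_assoc. apply Rmult_le_compat_r. lra. lra. }
  nra.
Qed.

Lemma RInt_expbound M a b : a <= b ->
  RInt (fun t => M * exp (-t/2)) a b = 2 * M * (exp (-a/2) - exp (-b/2)).
Proof.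
intros Hab.
apply (@is_RInt_unique R_CompleteNormedModule).
replace (2 * M * (exp (-a/2) - exp (-b/2))) with
  (minus ((fun t => -2 * M * exp (-t/2)) b) ((fun t => -2 * M * exp (-t/2)) a)).
2:{ unfold minus, plus, opp; simpl. ring. }
apply (@is_RInt_derive R_CompleteNormedModule (fun t => -2 * M * exp (-t/2))).
- intros t _. auto_derive. auto. replace (- t * / 2) with (-t/2) by (unfold Rdiv; reflexivity). field.
- intros t _. apply (@ex_derive_continuous R_AbsRing R_NormedModule). auto_derive. auto.
Qed.

Lemma FG_bound x : 1 <= x -> exists C, forall a b, 0 < a <= b -> FG x a b <= C.
Proof.
intros Hx. destruct (GI_bound x Hx) as [M [HM HB]].
exists (2 * M). intros a b Hab.
apply Rle_trans with (RInt (fun t => M * exp (-t/2)) a b).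
- apply RInt_le. lra. apply GI_ex; lra.
  apply (@ex_RInt_continuous R_CompleteNormedModule). intros z _.
  apply (@ex_derive_continuous R_AbsRing R_NormedModule). auto_derive. auto.
  intros t Ht. apply HB. lra.
- rewrite RInt_expbound by lra.
  assert (exp (-a/2) <= 1). { apply Rle_trans with (exp 0). apply exp_mono. lra. rewrite exp_0; lra. }
  pose proof (exp_pos (-b/2)). nra.
Qed.

Lemma FG_lower x : 1 <= x -> 0 < FG x 1 2.
Proof.
intros Hx.
apply Rlt_le_trans with (RInt (fun _ => exp (-2)) 1 2).
- rewrite RInt_const. unfold scal; simpl. unfold mult; simpl. pose proof (exp_pos (-2)). nra.
- apply RInt_le. lra. apply ex_RInt_const. apply GI_ex; lra.
  intros t Ht. unfold Gamma_integrand.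
  assert (1 <= Rpower t (x - 1)).
  { apply Rle_trans with (Rpower t 0). unfold Rpower. rewrite Rmult_0_l, exp_0. lra.
    apply Rle_Rpower; lra. }
  assert (exp (-2) <= exp (-t)) by (apply exp_mono; lra).
  pose proof (exp_pos (-2)). nra.
Qed.

Lemma Gamma_exists x : 1 <= x -> exists l, is_Gamma x l /\ 0 < l.
Proof.
intros Hx.
set (E := fun y => exists a b, 0 < a < 1 /\ 1 < b /\ y = FG x a b).
assert (HbE : bound E).
{ destruct (FG_bound x Hx) as [C HC]. exists C. intros y [a [b [Ha [Hb2 Hy]]]]. subst y. apply HC. lra. }
assert (Hne : exists y, E y). { exists (FG x (1/2) 2). exists (1/2), 2. repeat split; lra. }
destruct (completeness E HbE Hne) as [l [Hub Hlub]].
exists l. split.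
- intros eps Heps.
  assert (Hex : exists y, E y /\ l - eps < y).
  { apply NNPP. intros Hn. assert (l <= l - eps). apply Hlub. intros y Hy.
    destruct (Rle_or_lt y (l - eps)) as [H|H]. exact H. exfalso. apply Hn. exists y. tauto.
    lra. }
  destruct Hex as [y [[a0 [b0 [Ha0 [Hb0 Hy]]]] Hly]]. subst y.
  exists a0, b0. split. lra.
  intros a b Ha Hb.
  exists (ex_RInt_Reals_0 _ _ _ (GI_ex x a b ltac:(lra) ltac:(lra))).
  rewrite <- RInt_Reals. fold (FG x a b).
  assert (H1 : FG x a b <= l). { apply Hub. exists a, b. repeat split; lra. }
  assert (H2 : FG x a0 b0 <= FG x a b). { apply FG_mono; lra. }
  apply Rabs_def1; lra.
- apply Rlt_le_trans with (FG x (1/2) 2).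
  apply Rlt_le_trans with (FG x 1 2). apply FG_lower; exact Hx. apply FG_mono; lra.
  apply Hub. exists (1/2), 2. repeat split; lra.
Qed.

Lemma is_Gamma_unique x l1 l2 : is_Gamma x l1 -> is_Gamma x l2 -> l1 = l2.
Proof.
intros H1 H2. apply NNPP. intros Hne.
set (eps := Rabs (l1 - l2) / 2).
assert (Heps : 0 < eps). { unfold eps. assert (0 < Rabs (l1 - l2)) by (apply Rabs_pos_lt; lra). lra. }
destruct (H1 eps Heps) as [d1 [B1 [Hd1 HH1]]].
destruct (H2 eps Heps) as [d2 [B2 [Hd2 HH2]]].
set (a := Rmin d1 d2 / 2). set (b := Rmax B1 B2 + 1).
assert (Ha1 : 0 < a < d1). { unfold a. split; apply Rmin_case_strong; intros; lra. }
assert (Ha2 : 0 < a < d2). { unfold a. split; apply Rmin_case_strong; intros; lra. }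
assert (Hb1 : B1 < b). { unfold b. apply Rmax_case_strong; intros; lra. }
assert (Hb2 : B2 < b). { unfold b. apply Rmax_case_strong; intros; lra. }
destruct (HH1 a b Ha1 Hb1) as [pr1 Hp1].
destruct (HH2 a b Ha2 Hb2) as [pr2 Hp2].
rewrite (RiemannInt_P5 pr1 pr2) in Hp1.
assert (Rabs (l1 - l2) <= Rabs (RiemannInt pr2 - l1) + Rabs (RiemannInt pr2 - l2)).
{ replace (l1 - l2) with ((RiemannInt pr2 - l2) - (RiemannInt pr2 - l1)) by ring.
  eapply Rle_trans. apply Rabs_triang. rewrite Rabs_Ropp. lra. }
unfold eps in *. lra.
Qed.

Lemma Gamma_spec x : 1 <= x -> is_Gamma x (Gamma x) /\ 0 < Gamma x.
Proof.
intros Hx. destruct (Gamma_exists x Hx) as [l [Hl Hpos]].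
assert (HG : is_Gamma x (Gamma x)).
{ unfold Gamma. apply epsilon_spec. exists l; exact Hl. }
split. exact HG. rewrite (is_Gamma_unique x _ _ HG Hl). exact Hpos.
Qed.

Lemma GI_shift x t : Gamma_integrand (x + 1) t = Rpower t x * exp (- t).
Proof. unfold Gamma_integrand. replace (x + 1 - 1) with x by ring. reflexivity. Qed.

Lemma h_deriv x t : 0 < t ->
  is_derive (fun s => - (Rpower s x * exp (- s))) t
    (Gamma_integrand (x + 1) t - x * Gamma_integrand x t).
Proof.
intros Ht.
assert (H1 : is_derive (fun s => Rpower s x) t (x * Rpower t (x - 1))).
{ apply is_derive_Reals. apply derivable_pt_lim_power. exact Ht. }
assert (H2 : is_derive (fun s => exp (- s)) t (- exp (- t))).
{ auto_derive. auto. ring. }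
pose proof (is_derive_mult _ _ _ _ _ H1 H2 ltac:(intros; apply Rmult_comm)) as H3.
pose proof (is_derive_opp _ _ _ H3) as H4.
rewrite GI_shift. unfold Gamma_integrand.
replace (Rpower t x * exp (- t) - x * (Rpower t (x - 1) * exp (- t))) with
  (opp (plus (mult (x * Rpower t (x - 1)) (exp (- t))) (mult (Rpower t x) (- exp (- t))))).
exact H4.
unfold opp, plus, mult; simpl. ring.
Qed.

Lemma FG_ibp x a b : 0 < a <= b ->
  FG (x + 1) a b = Rpower a x * exp (- a) - Rpower b x * exp (- b) + x * FG x a b.
Proof.
intros Hab.
assert (Hpos : forall t, Rmin a b <= t <= Rmax a b -> 0 < t).
{ intros t Ht. assert (Rmin a b = a) by (apply Rmin_left; lra). lra. }
assert (HI : is_RInt (fun t => Gamma_integrand (x + 1) t - x * Gamma_integrand x t) a b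
   (minus ((fun s => - (Rpower s x * exp (- s))) b) ((fun s => - (Rpower s x * exp (- s))) a))).
{ apply (@is_RInt_derive R_CompleteNormedModule (fun s => - (Rpower s x * exp (- s)))).
  - intros t Ht. apply h_deriv. apply Hpos; exact Ht.
  - intros t Ht. pose proof (Hpos t Ht).
    apply (@ex_derive_continuous R_AbsRing R_NormedModule). unfold Gamma_integrand, Rpower.
    auto_derive. repeat split; lra. }
assert (HJ : is_RInt (fun t => x * Gamma_integrand x t) a b (x * FG x a b)).
{ apply (@is_RInt_scal R_NormedModule (Gamma_integrand x) a b x (FG x a b)).
  apply (@RInt_correct R_CompleteNormedModule). apply GI_ex; lra. }
pose proof (@is_RInt_plus R_NormedModule _ _ a b _ _ HI HJ) as HK.
unfold FG at 1. apply (@is_RInt_unique R_CompleteNormedModule).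
apply (@is_RInt_ext R_NormedModule (fun y => plus (Gamma_integrand (x + 1) y - x * Gamma_integrand x y) (x * Gamma_integrand x y))).
{ intros t _. unfold plus; simpl. ring. }
replace (Rpower a x * exp (- a) - Rpower b x * exp (- b) + x * FG x a b) with
  (plus (minus (- (Rpower b x * exp (- b))) (- (Rpower a x * exp (- a)))) (x * FG x a b)).
exact HK.
unfold plus, minus, opp; simpl. unfold plus, opp; simpl. ring.
Qed.

Lemma Gamma_rec x : 1 <= x -> Gamma (x + 1) = x * Gamma x.
Proof.
intros Hx.
destruct (Gamma_spec x Hx) as [Hl _].
set (l := Gamma x) in *.
assert (HG : is_Gamma (x + 1) (x * l)).
{ intros eps Heps.
  destruct (GI_bound (x + 1) ltac:(lra)) as [M [HM HB]].
  assert (He1 : 0 < eps / (3 * x)). { apply Rdiv_lt_0_compat; lra. }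
  destruct (Hl _ He1) as [d0 [B0 [Hd0 HH]]].
  set (d := Rmin d0 (Rmin 1 (eps / 3))).
  assert (Hd : 0 < d <= d0 /\ d <= 1 /\ d <= eps / 3).
  { unfold d. pose proof (Rmin_l d0 (Rmin 1 (eps/3))). pose proof (Rmin_r d0 (Rmin 1 (eps/3))).
    pose proof (Rmin_l 1 (eps/3)). pose proof (Rmin_r 1 (eps/3)).
    assert (0 < Rmin 1 (eps/3)) by (apply Rmin_glb_lt; lra).
    assert (0 < Rmin d0 (Rmin 1 (eps/3))) by (apply Rmin_glb_lt; lra). lra. }
  set (B := Rmax B0 (Rmax d (-2 * ln (eps / (3 * M))))).
  assert (HBd : B0 <= B /\ d <= B /\ -2 * ln (eps / (3 * M)) <= B).
  { unfold B. pose proof (Rmax_l B0 (Rmax d (-2 * ln (eps / (3 * M))))). pose proof (Rmax_r B0 (Rmax d (-2 * ln (eps / (3 * M))))).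
    pose proof (Rmax_l d (-2 * ln (eps / (3 * M)))). pose proof (Rmax_r d (-2 * ln (eps / (3 * M)))). lra. }
  exists d, B. split. lra.
  intros a b Ha Hb.
  destruct (HH a b ltac:(lra) ltac:(lra)) as [pr0 Hp0].
  rewrite <- RInt_Reals in Hp0. fold (FG x a b) in Hp0.
  exists (ex_RInt_Reals_0 _ _ _ (GI_ex (x + 1) a b ltac:(lra) ltac:(lra))).
  rewrite <- RInt_Reals. fold (FG (x + 1) a b).
  rewrite FG_ibp by lra.
  assert (HA : 0 <= Rpower a x * exp (- a) <= a).
  { assert (E1 : Rpower a x = a * Rpower a (x - 1)).
    { replace x with (1 + (x - 1)) at 1 by ring. rewrite Rpower_plus, Rpower_1 by lra. reflexivity. }
    rewrite E1.
    assert (Rpower a (x - 1) <= 1) by (apply Rpower_le1; lra).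
    assert (0 < Rpower a (x - 1)) by (unfold Rpower; apply exp_pos).
    assert (exp (- a) <= 1). { apply Rle_trans with (exp 0). apply exp_mono. lra. rewrite exp_0; lra. }
    pose proof (exp_pos (- a)). split. left; apply Rmult_lt_0_compat; [nra|lra].
    apply Rle_trans with (a * 1 * 1). apply Rmult_le_compat; try nra. lra. }
  assert (HBt : 0 <= Rpower b x * exp (- b) < eps / 3).
  { split. left; apply Rmult_lt_0_compat. unfold Rpower; apply exp_pos. apply exp_pos.
    rewrite <- GI_shift. apply Rle_lt_trans with (M * exp (- b / 2)). apply HB; lra.
    assert (exp (- b / 2) < eps / (3 * M)).
    { rewrite <- (exp_ln (eps / (3 * M))). apply exp_increasing. lra.
      apply Rdiv_lt_0_compat; lra. }
    apply Rlt_le_trans with (M * (eps / (3 * M))). apply Rmult_lt_compat_l; lra.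
    right. field. lra. }
  assert (HC : Rabs (x * FG x a b - x * l) < eps / 3).
  { rewrite <- Rmult_minus_distr_l, Rabs_mult, Rabs_right by lra.
    apply Rlt_le_trans with (x * (eps / (3 * x))). apply Rmult_lt_compat_l; lra.
    right. field. lra. }
  apply Rabs_def2 in HC. apply Rabs_def1; lra. }
destruct (Gamma_spec (x + 1) ltac:(lra)) as [HG' _].
exact (is_Gamma_unique _ _ _ HG' HG).
Qed.

From Stdlib Require Import Reals Lra.
From mathcomp Require Import all_boot all_order all_fingroup all_algebra.
From mathcomp Require Import Rstruct.
Set Implicit Arguments. Unset Strict Implicit. Unset Printing Implicit Defensive.
Import Order.TTheory GRing.Theory Num.Theory.
Local Open Scope ring_scope.

Lemma rdetE k (A : 'I_k -> 'I_k -> R) : rdet A = \det (\matrix_(i, j) A i j).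
Proof.
rewrite /rdet /determinant. apply: eq_bigr => s _.
rewrite [X in _ = _ * X](eq_bigr (fun i => A i (s i))); last by move=> i _; rewrite mxE.
by case: (odd_perm s); rewrite ?expr1 ?expr0.
Qed.

Definition Qe (e : nat -> R) (j : nat) (z : R) : R := \prod_(1 <= r < j.+1) (e r + z).
Definition Qp (e : nat -> R) (j : nat) : {poly R} :=
  \prod_(x <- map (fun r => - e r) (iota 1 j)) ('X - x%:P).

Lemma size_Qp e j : size (Qp e j) = j.+1.
Proof. by rewrite /Qp size_prod_XsubC size_map size_iota. Qed.

Lemma Qp_lead e j : (Qp e j)`_j = 1.
Proof.
have H : Qp e j \is monic by apply: monic_prod_XsubC.
move/monicP: H.
by rewrite lead_coefE -/(Qp e j) size_Qp.
Qed.

Lemma horner_Qp e j z : (Qp e j).[z] = Qe e j z.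
Proof.
rewrite /Qp /Qe horner_prod big_map /index_iota subn1 /=.
by apply: eq_bigr => r _; rewrite hornerXsubC opprK addrC.
Qed.

Lemma detB k (e : nat -> R) (y : 'I_k -> R) :
  \det (\matrix_(i, j) Qe e j (y i)) = \prod_(i < k) \prod_(j < k | (i < j)%N) (y j - y i).
Proof.
set a : 'rV[R]_k := \row_i y i.
set U : 'M[R]_k := \matrix_(l, j) (Qp e j)`_l.
have -> : \matrix_(i, j) Qe e j (y i) = (Vandermonde k a)^T *m U.
  apply/matrixP => i j; rewrite !mxE -horner_Qp (@horner_coef_wide _ k); last by rewrite size_Qp.
  by apply: eq_bigr => l _; rewrite !mxE mulrC.
rewrite det_mulmx det_tr det_Vandermonde.
have -> : \det U = 1.
  rewrite -det_tr det_trig.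
    by rewrite big1 // => i _; rewrite !mxE Qp_lead.
  by apply/is_trig_mxP => i j lt_ij; rewrite !mxE nth_default // size_Qp.
rewrite mulr1; apply: eq_bigr => i _; apply: eq_bigr => j _; by rewrite !mxE.
Qed.

Lemma sum_perm_det k e (c y : 'I_k -> R) :
  \sum_(s : 'S_k) \det (\matrix_(i, j) (c (s i) * Qe e i (y (s i)) * Qe e j (y (s i))))
  = \prod_(m < k) c m * (\det (\matrix_(i, j) Qe e j (y i))) ^+ 2.
Proof.
set B := \matrix_(i, j) Qe e j (y i).
have step (s : 'S_k) : \det (\matrix_(i, j) (c (s i) * Qe e i (y (s i)) * Qe e j (y (s i))))
   = \prod_(m < k) c m * \det B * ((-1) ^+ s * \prod_(i < k) Qe e i (y (s i))).
  have -> : \matrix_(i, j) (c (s i) * Qe e i (y (s i)) * Qe e j (y (s i)))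
          = diag_mx (\row_i (c (s i) * Qe e i (y (s i)))) *m row_perm s B.
    by apply/matrixP => i j; rewrite mul_diag_mx !mxE.
  rewrite det_mulmx det_diag row_permE det_mulmx det_perm.
  rewrite (eq_bigr (fun i => c (s i) * Qe e i (y (s i)))); last by move=> i _; rewrite mxE.
  rewrite big_split /=.
  have -> : \prod_(i < k) c (s i) = \prod_(m < k) c m.
    by symmetry; apply: (reindex_inj (@perm_inj _ s)).
  by rewrite -!mulrA; congr (_ * _); rewrite [RHS]mulrC mulrCA mulrA.
rewrite (eq_bigr _ (fun s _ => step s)) -mulr_sumr -mulrA expr2; congr (_ * (_ * _)).
rewrite -det_tr /determinant; apply: eq_bigr => s _; congr (_ * _).
by apply: eq_bigr => i _; rewrite !mxE.
Qed.

From mathcomp Require Import zify.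

Lemma prod_succ k : (\prod_(i < k) i.+1 = k`!)%N.
Proof. elim: k => [|k IH]; first by rewrite big_ord0. by rewrite big_ord_recr /= IH factS mulnC. Qed.

Lemma prod_rev k : (\prod_(i < k) (k - i) = k`!)%N.
Proof.
rewrite (reindex_inj rev_ord_inj) /= -prod_succ; apply: eq_bigr => i _ /=.
have := ltn_ord i; lia.
Qed.

Lemma vprod k (al : R) :
  \prod_(i < k) \prod_(j < k | (i < j)%N) ((j.+1)%:R * al - (i.+1)%:R * al)
  = \prod_(j < k) ((j`!)%:R * al ^+ j).
Proof.
elim: k => [|k IH]; first by rewrite !big_ord0.
rewrite big_ord_recr /= [RHS]big_ord_recr /= -IH.
rewrite [X in _ * X = _]big1 ?mulr1; last first.
  by move=> j /= ltkj; exfalso; move: (ltn_ord j); lia.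
rewrite (eq_bigr (fun i : 'I_k => \prod_(j < k | (i < j)%N) ((j.+1)%:R * al - (i.+1)%:R * al)
                     * ((k.+1)%:R * al - (i.+1)%:R * al))); last first.
  move=> i _; rewrite big_mkcond big_ord_recr /= -big_mkcond /= ltn_ord; congr (_ * _).
rewrite big_split /=; congr (_ * _).
rewrite (eq_bigr (fun i : 'I_k => (k - i)%:R * al)); last first.
  move=> i _; rewrite -mulrBl -natrB; last by rewrite ltnS ltnW.
  by rewrite subSS.
rewrite big_split /= prodr_const card_ord -natr_prod prod_rev //.
Qed.

Lemma natfact k : (k.+1 * (k.+1 - 1) = k * (k - 1) + k * 2)%N.
Proof. case: k => // k'. rewrite !subSS !subn0 mulnC -mulnDr addn2. by []. Qed.

Lemma vsq k (al : R) :
  (\prod_(j < k) ((j`!)%:R * al ^+ j)) ^+ 2 = al ^+ (k * (k - 1)) * \prod_(j < k) ((j`!)%:R ^+ 2).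
Proof.
elim: k => [|k IH]; first by rewrite !big_ord0 expr1n mul0n expr0 mulr1.
rewrite !big_ord_recr /= exprMn IH exprMn.
rewrite natfact.
rewrite exprD [al ^+ (k * 2)]exprM.
set A := al ^+ (k * (k - 1)). set B := (al ^+ k) ^+ 2. set F := k`!%:R ^+ 2.
set P := \prod_(j < k) _.
clearbody A B F P. by rewrite -!mulrA; congr (_ * _); rewrite [RHS]mulrC mulrA.
Qed.

Lemma Gamma_shift_n (y : R) j : 0 < y ->
  Gamma (INR j.+1 + y) = Gamma (1 + y) * \prod_(1 <= r < j.+1) (INR r + y).
Proof.
move=> ypos; elim: j => [|j IH].
  by rewrite big_geq // mulr1.
rewrite big_nat_recr // mulrA -IH.
have -> : Rplus (INR j.+2) y = Rplus (Rplus (INR j.+1) y) 1.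
  by rewrite (S_INR j.+1) !RplusE addrAC.
rewrite Gamma_rec; last first.
  move/RltP: ypos => ypos. have y0 : Rlt (IZR 0) y := ypos. have := pos_INR j. rewrite (S_INR j) => ?. lra.
by rewrite mulrC.
Qed.

Local Close Scope ring_scope.
Local Open Scope R_scope.

Theorem mainTheorem5 (alpha : R) (k : nat) (halpha : 0 < alpha) (hk : (2 <= k)%N) :
  let RHS :=
    alpha ^ (k * (k - 1)) *
    \big[Rmult/1]_(j < k)
       ((INR (j`!)) ^ 2 * Gamma (1 + alpha * INR j.+1)) in
  \big[Rplus/0]_(s : 'S_k)
     rdet (fun i j : 'I_k =>
       Gamma (INR j.+1 + INR (s i).+1 * alpha) *
       \big[Rmult/1]_(1 <= r < i.+1) (INR r + INR (s i).+1 * alpha))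
  = RHS /\ 0 < RHS.
Proof.
move=> T.
Local Open Scope ring_scope.
set y := fun m : 'I_k => INR (m : nat).+1 * alpha.
set c := fun m : 'I_k => Gamma (1 + y m).
have ypos m : (0 < y m)%R.
  apply/RltP; rewrite /y; apply: Rmult_lt_0_compat => //; apply: lt_0_INR; lia.
have E1 (s : 'S_k) : rdet (fun i j : 'I_k =>
       Gamma (INR j.+1 + INR (s i).+1 * alpha) *
       \big[Rmult/1]_(1 <= r < i.+1) (INR r + INR (s i).+1 * alpha))
   = \det (\matrix_(i, j) (c (s i) * Qe INR i (y (s i)) * Qe INR j (y (s i))))%R.
  rewrite rdetE; congr (\det _); apply/matrixP => i j; rewrite !mxE.
  rewrite (Gamma_shift_n _ (ypos (s i))) /Qe /c /y.
  by rewrite mulrAC.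
rewrite (eq_bigr _ (fun s _ => E1 s)) sum_perm_det detB.
have Ey : forall i j : 'I_k, y j - y i = (j.+1)%:R * alpha - (i.+1)%:R * alpha.
  by move=> i j; rewrite /y !INRE.
rewrite [X in _ * X ^+ 2](eq_bigr (fun i : 'I_k => \prod_(j < k | (i < j)%N) ((j.+1)%:R * alpha - (i.+1)%:R * alpha))); last first.
  by move=> i _; apply: eq_bigr => j _; rewrite Ey.
rewrite vprod vsq.
have Ec : \prod_(m < k) c m = \prod_(j < k) Gamma (1 + alpha * INR j.+1).
  by apply: eq_bigr => j _; rewrite /c /y Rmult_comm.
have Ef : \prod_(j < k) (j`!)%:R ^+ 2 = \prod_(j < k) pow (INR j`!) 2.
  by apply: eq_bigr => j _; rewrite RpowE INRE.
have HR : T = \prod_(m < k) c m * (alpha ^+ (k * (k - 1)) * \prod_(j < k) (j`!)%:R ^+ 2).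
  rewrite /T RpowE big_split /= -Ec -Ef.
  by rewrite [RHS]mulrC -[in RHS]mulrA.
rewrite -HR; split => //.
rewrite HR; apply/RltP.
have cpos m : 0 < c m.
  apply/RltP; rewrite /c; apply: (proj2 (Gamma_spec _ _)).
  move/RltP: (ypos m) => ym. have ym' : Rlt (IZR 0) (y m) := ym. lra.
apply: mulr_gt0; first by apply: prodr_gt0 => m _; exact: cpos.
apply: mulr_gt0; first by apply: exprn_gt0; apply/RltP.
apply: prodr_gt0 => j _; apply: exprn_gt0; rewrite ltr0n; exact: fact_gt0.
Qed.
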